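(* Let $D$ be a series-parallel digraph with source $s$, sink $t$ and travel times $\tau\ge0$, let $\boldsymbol{P}^*$ be an optimal path profile for \textsc{Min-Max Disjoint Paths} on $D$ with $k$ paths, and let $\boldsymbol{P}$ be a path profile of $k$ pairwise arc-disjoint $s$-$t$-paths in $D$ that is consistent with $\boldsymbol{P}^*$ and balanced in $D$. Then $C_{\max}(\boldsymbol{P},D)\le H_k\cdot C_{\max}(\boldsymbol{P}^*,D)$.
   Context: $H_k=\sum_{j=1}^k\frac1j$. For a path profile (tuple of pairwise arc-disjoint $s$-$t$-paths) $\boldsymbol{P}$: $\tau(P)=\sum_{a\in P}\tau_a$, $C_{\max}(\boldsymbol{P},D)=\max_{P\in\boldsymbol{P}}\tau(P)$, $\theta(\boldsymbol{P},D)=\sum_{P\in\boldsymbol{P}}\tau(P)$. $\boldsymbol{P}$ is consistent with $\boldsymbol{P}^*$ in $D$ if it has the same number $k$ of paths and $\theta(\boldsymbol{P},D)\le\theta(\boldsymbol{P}^*,D)$. If the path lengths of $\boldsymbol{P}$ are $p_1\ge\dots\ge p_k$, then $\boldsymbol{P}$ is balanced in $D$ if $\frac1i\sum_{j=1}^ip_j-p_{i+1}\le C_{\max}(\boldsymbol{P}^*,D)$ for all $i\in[k-1]$. *)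

(* Defs.v *)
From HB Require Import structures.
From mathcomp Require Import all_boot all_order all_algebra.
Set Implicit Arguments. Unset Strict Implicit. Unset Printing Implicit Defensive.
Import Order.TTheory GRing.Theory Num.Theory.
Local Open Scope ring_scope.

Definition harmonic (R : realFieldType) (k : nat) : R :=
  \sum_(1 <= j < k.+1) (j%:R)^-1.

Section Digraph.
Variables (V A : finType) (tl hd : A -> V).

Definition verts (E : {set A}) : {set V} :=
  [set v | [exists a in E, (tl a == v) || (hd a == v)]].

(* Two-terminal series-parallel (multi)digraphs, given by arc set and
   terminals (source, sink). *)
Inductive sp : {set A} -> V -> V -> Prop :=
| sp_arc a : tl a != hd a -> sp [set a] (tl a) (hd a)
| sp_series E1 E2 s u t :
    sp E1 s u -> sp E2 u t -> [disjoint E1 & E2] ->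
    verts E1 :&: verts E2 = [set u] -> sp (E1 :|: E2) s t
| sp_parallel E1 E2 s t :
    sp E1 s t -> sp E2 s t -> [disjoint E1 & E2] ->
    verts E1 :&: verts E2 = [set s; t] -> sp (E1 :|: E2) s t.

Definition series_parallel (s t : V) : Prop :=
  sp [set: A] s t /\ verts [set: A] = [set: V].

Fixpoint walk_from (v : V) (p : seq A) : bool :=
  if p is a :: p' then (tl a == v) && walk_from (hd a) p' else true.

Definition st_path (s t : V) (p : seq A) : bool :=
  [&& walk_from s p, last s (map hd p) == t & uniq (s :: map hd p)].

Definition path_profile (s t : V) (k : nat) (P : 'I_k -> seq A) : Prop :=
  (forall i, st_path s t (P i)) /\
  (forall i j, i != j -> forall a, a \in P i -> a \notin P j).

Variable R : realFieldType.
Variable tau : A -> R.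

Definition tau_path (p : seq A) : R := \sum_(a <- p) tau a.

Definition Cmax (k : nat) (P : 'I_k -> seq A) : R :=
  \big[Num.max/0]_(i < k) tau_path (P i).

Definition theta (k : nat) (P : 'I_k -> seq A) : R :=
  \sum_(i < k) tau_path (P i).

Definition minmax_optimal (s t : V) (k : nat) (Ps : 'I_k -> seq A) : Prop :=
  path_profile s t Ps /\
  forall Q : 'I_k -> seq A, path_profile s t Q -> Cmax Ps <= Cmax Q.

(* consistency (the same number k of paths is enforced by the types) *)
Definition consistent (k : nat) (P Ps : 'I_k -> seq A) : Prop :=
  theta P <= theta Ps.

Definition sorted_lengths (k : nat) (P : 'I_k -> seq A) : seq R :=
  sort (fun x y : R => y <= x) [seq tau_path (P i) | i <- enum 'I_k].

(* balanced: paper index i in 1..k-1; here p is 0-indexed, so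
   (1/i) * (p_0 + ... + p_(i-1)) - p_i <= Cmax Ps for 1 <= i < k *)
Definition balanced (k : nat) (P Ps : 'I_k -> seq A) : Prop :=
  let p := sorted_lengths P in
  forall i : nat, (1 <= i < k)%N ->
    (i%:R)^-1 * (\sum_(j < i) nth 0 p j) - nth 0 p i <= Cmax Ps.

End Digraph.

(* Main.v *)
Require Import Defs.
From HB Require Import structures.
From mathcomp Require Import all_boot all_order all_algebra.
From mathcomp Require Import ring lra.
Import Order.TTheory GRing.Theory Num.Theory.
Local Open Scope ring_scope.

Lemma harmonicS (R : realFieldType) i :
  harmonic R i.+1 = harmonic R i + (i.+1%:R)^-1.
Proof. by rewrite /harmonic big_nat_recr. Qed.

Lemma avg_bound (R : realFieldType) (p : seq R) (C : R) (k : nat) :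
  (forall i : nat, (1 <= i < k)%N ->
    (i%:R)^-1 * (\sum_(j < i) nth 0 p j) - nth 0 p i <= C) ->
  forall i, (1 <= i <= k)%N ->
  nth 0 p 0 - C * (harmonic R i - 1) <= (\sum_(j < i) nth 0 p j) / i%:R.
Proof.
move=> Hb; elim=> [//|i IH] /andP[_ Hik].
case: i IH Hik => [|i] IH Hik.
  rewrite /harmonic big_nat1 big_ord_recr big_ord0 /= invr1 subrr mulr0 subr0 add0r.
  by rewrite mulr1.
have IH' := IH (ltnW Hik).
have Hb' := Hb i.+1 Hik.
set S := \sum_(j < i.+1) nth 0 p j in IH' Hb' *.
rewrite big_ord_recr /= -/S harmonicS.
set x := nth 0 p i.+1 in Hb' *.
have hi : (0 < i.+1%:R :> R) by rewrite ltr0n.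
have hi2 : (0 < i.+2%:R :> R) by rewrite ltr0n.
set a := S / i.+1%:R in IH'.
have Sa : S = a * i.+1%:R by rewrite /a divfK // gt_eqF.
have Hb2 : a - C <= x by rewrite mulrC -/a in Hb'; lra.
have -> : (S + x) / i.+2%:R = a + (x - (a - C) - C) / i.+2%:R.
  have e : i.+2%:R = i.+1%:R + 1 :> R by rewrite -natr1.
  have hn : i.+1%:R + 1 != 0 :> R by rewrite -e gt_eqF.
  move: Sa hn; clearbody a S x; move=> -> hn; rewrite e; field.
  rewrite gt_eqF //; have := ler0n R i; lra.
have : 0 <= (x - (a - C)) / i.+2%:R by apply: divr_ge0; lra.
have -> : (x - (a - C) - C) / i.+2%:R = (x - (a - C)) / i.+2%:R - C * i.+2%:R^-1.
  by rewrite mulrBl.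
have -> : C * (harmonic R i.+1 + i.+2%:R^-1 - 1) = C * (harmonic R i.+1 - 1) + C * i.+2%:R^-1.
  by ring.
move=> h; move: h IH'; generalize ((x - (a - C)) / i.+2%:R) (C / i.+2%:R) (C * (harmonic R i.+1 - 1)); move=> *; lra.
Qed.

Theorem lemma8 (R : realFieldType) (V A : finType) (tl hd : A -> V)
  (s t : V) (tau : A -> R) (k : nat) (Ps P : 'I_k -> seq A) :
  series_parallel tl hd s t ->
  (forall a, 0 <= tau a) ->
  minmax_optimal tl hd tau s t Ps ->
  path_profile tl hd s t P ->
  consistent tau P Ps ->
  balanced tau P Ps ->
  Cmax tau P <= harmonic R k * Cmax tau Ps.
Proof.
move=> _ tau0 _ _ Hcons Hbal.
case: k Ps P Hcons Hbal => [|k] Ps P Hcons Hbal.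
  by rewrite /Cmax big_ord0 /harmonic big_geq // mul0r.
set C := Cmax tau Ps.
set p := sorted_lengths tau P in Hbal.
have Hsz : size p = k.+1 by rewrite size_sort size_map size_enum_ord.
have Hperm : perm_eq p [seq tau_path tau (P i) | i <- enum 'I_k.+1].
  by rewrite perm_sort.
have Hsum : \sum_(j < k.+1) nth 0 p j = theta tau P.
  transitivity (\sum_(y <- p) y).
    by rewrite [RHS](big_nth 0) Hsz big_mkord.
  by rewrite (perm_big _ Hperm) big_map big_enum.
have HthPs : theta tau Ps <= k.+1%:R * C.
  apply: (@le_trans _ _ (\sum_(i < k.+1) C)).
    apply: ler_sum => i _.
    exact: (le_bigmax (0 : R) (fun i => tau_path tau (Ps i)) i).
  by rewrite sumr_const card_ord mulr_natl.
have Hav := @avg_bound R p C k.+1 Hbal k.+1 (leqnn _).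
rewrite Hsum in Hav.
have hk : (0 < k.+1%:R :> R) by rewrite ltr0n.
have Hth : theta tau P / k.+1%:R <= C.
  rewrite ler_pdivrMr //; rewrite mulrC.
  exact: le_trans Hcons HthPs.
have Hp0 : nth 0 p 0 <= harmonic R k.+1 * C.
  have := le_trans Hav Hth; lra.
have Hsorted : sorted (fun x y : R => y <= x) p.
  apply: sort_sorted => x y; exact: le_total.
have Hall : forall x, x \in p -> x <= nth 0 p 0.
  case: p Hsorted Hsz {Hav Hp0 Hbal Hperm Hsum} => [//|y q] /= Hs _ x.
  have := order_path_min (fun a b c h1 h2 => le_trans h2 h1) Hs.
  move=> /allP Hq; rewrite inE => /orP[/eqP->//|/Hq //].
have Hin : forall i, tau_path tau (P i) \in p.
  by move=> i; rewrite (perm_mem Hperm); apply/mapP; exists i; rewrite ?mem_enum.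
have Hge : 0 <= nth 0 p 0.
  apply: le_trans (Hall _ (Hin ord0)).
  by rewrite /tau_path; apply: sumr_ge0 => a _.
rewrite /Cmax; apply: (big_ind (fun x => x <= harmonic R k.+1 * C)).
- exact: le_trans Hge Hp0.
- by move=> x y hx hy; rewrite ge_max hx hy.
- by move=> i _; apply: le_trans (Hall _ (Hin i)) Hp0.
Qed.
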